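(* Let $n\ge 2$. If a nontrivial periodic braid $X\in B_n$ is given as a word of length $l$ in the generators $\sigma_1,\ldots,\sigma_{n-1}$ and their inverses, then $l\ge n-1$.
   Context: $B_n$ is Artin's braid group with generators $\sigma_1,\ldots,\sigma_{n-1}$ and relations $\sigma_i\sigma_j=\sigma_j\sigma_i$ ($|i-j|>1$), $\sigma_i\sigma_j\sigma_i=\sigma_j\sigma_i\sigma_j$ ($|i-j|=1$). $\Delta^2$, the square of $\Delta=\sigma_1(\sigma_2\sigma_1)\cdots(\sigma_{n-1}\cdots\sigma_1)$, generates the center. A braid is periodic if some nonzero power of it is a power of $\Delta^2$. *)

(* Defs.v *)
(* Artin braid group B_n presented by generators and relations:
   elements are words in sigma_i^{+-1} (1 <= i <= n-1) modulo the congruence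
   generated by free cancellation and the braid relations. *)
From mathcomp Require Import all_boot all_order all_algebra.
Set Implicit Arguments. Unset Strict Implicit. Unset Printing Implicit Defensive.

(* A letter (i, true) is sigma_i, (i, false) is sigma_i^{-1}. *)
Definition letter := (nat * bool)%type.
Definition bword := seq letter.

Definition gen_ok (n i : nat) : bool := (0 < i) && (i < n).

Definition word_ok (n : nat) (w : bword) : bool := all (fun a => gen_ok n a.1) w.

Definition sig (i : nat) : letter := (i, true).

Inductive braid_rel (n : nat) : bword -> bword -> Prop :=
| rel_cancel i b : gen_ok n i -> braid_rel n [:: (i, b); (i, ~~ b)] [::]
| rel_comm i j : gen_ok n i -> gen_ok n j -> (j.+1 < i) || (i.+1 < j) ->
    braid_rel n [:: sig i; sig j] [:: sig j; sig i]
| rel_braid i j : gen_ok n i -> gen_ok n j -> (j == i.+1) || (i == j.+1) ->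
    braid_rel n [:: sig i; sig j; sig i] [:: sig j; sig i; sig j].

Inductive braid_eq (n : nat) : bword -> bword -> Prop :=
| beq_rel u l r v : braid_rel n l r -> braid_eq n (u ++ l ++ v) (u ++ r ++ v)
| beq_refl w : braid_eq n w w
| beq_sym w1 w2 : braid_eq n w1 w2 -> braid_eq n w2 w1
| beq_trans w1 w2 w3 : braid_eq n w1 w2 -> braid_eq n w2 w3 -> braid_eq n w1 w3.

Definition winv (w : bword) : bword := rev [seq (a.1, ~~ a.2) | a <- w].

Definition wpow (w : bword) (k : int) : bword :=
  match k with
  | Posz m => flatten (nseq m w)
  | Negz m => flatten (nseq m.+1 (winv w))
  end.

(* Delta = sigma_1 (sigma_2 sigma_1) ... (sigma_{n-1} ... sigma_1) *)
Definition Delta (n : nat) : bword :=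
  flatten [seq [seq sig i | i <- rev (iota 1 j)] | j <- iota 1 n.-1].

Definition Delta2 (n : nat) : bword := Delta n ++ Delta n.

Definition periodic (n : nat) (X : bword) : Prop :=
  exists (k m : int), k != 0 /\ braid_eq n (wpow X k) (wpow (Delta2 n) m).

(* Main.v *)
Require Import Defs.
From mathcomp Require Import all_boot all_order all_algebra.
From Stdlib Require Import Setoid Morphisms FunctionalExtensionality.
From mathcomp Require Import zify.
Set Implicit Arguments. Unset Strict Implicit. Unset Printing Implicit Defensive.

Definition word := seq nat.
Definition aty (a b : nat) : nat :=
  if a == b then 0 else if (a.+1 == b) || (b.+1 == a) then 1 else 2.

Definition rel_t (tf : nat -> nat -> nat) (l r : word) : bool :=
  match l, r with
  | [:: a; b], [:: b'; a'] => (tf a b == 2) && (a == a') && (b == b')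
  | [:: a; b; a2], [:: b'; a'; b2] =>
      (tf a b == 1) && (a2 == a) && (a' == a) && (b' == b) && (b2 == b)
  | _, _ => false
  end.

Fixpoint nbrs (tf : nat -> nat -> nat) (u : word) : seq word :=
  match u with
  | [::] => [::]
  | a :: u' =>
    let fr := match u' with
      | b :: u'' => (if tf a b == 2 then [:: b :: a :: u''] else [::]) ++
         (match u'' with
          | a2 :: u3 => if (tf a b == 1) && (a2 == a) then [:: b :: a :: b :: u3] else [::]
          | _ => [::] end)
      | _ => [::] end in
    fr ++ map (cons a) (nbrs tf u')
  end.

Fixpoint reach tf (k : nat) (S : seq word) : seq word :=
  if k is k'.+1 then reach tf k' (undup (S ++ flatten (map (nbrs tf) S))) else S.

Definition peqb tf k (u v : word) : bool := v \in reach tf k [:: u].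

Definition fg (tf : nat -> nat -> nat) (a b : nat) : word :=
  if tf a b == 0 then [::] else if tf a b == 1 then [:: b; a] else [:: b].

Fixpoint cmp tf (fuel : nat) (u v : word) : option (word * word) :=
  if fuel is fuel'.+1 then
  match u, v with
  | [::], _ => Some (v, [::])
  | _, [::] => Some ([::], u)
  | x :: u', y :: v' =>
    match cmp tf fuel' u' (fg tf x y), cmp tf fuel' v' (fg tf y x) with
    | Some (a1, b1), Some (a2, b2) =>
      match cmp tf fuel' b1 b2 with
      | Some (a3, b3) => Some (a1 ++ a3, a2 ++ b3)
      | None => None end
    | _, _ => None end
  end else None.

Definition nm (a : nat) : nat := if a is 0 then 0 else if a is 1 then 1 else 2.
Definition Ttr (t : nat * nat * nat) (a b : nat) : nat :=
  let a' := nm a in let b' := nm b in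
  if a' == b' then 0 else
  if (a' + b' == 1) then t.1.1 else if (a' + b' == 3) then t.1.2 else t.2.

Definition cube_ok (t : nat * nat * nat) : bool :=
  let T := Ttr t in
  match cmp T 30 (fg T 1 2) (fg T 1 0) with
  | Some (cu, cv) =>
    has (fun w => (take (size (fg T 0 2)) w == fg T 0 2) &&
        peqb T 12 (fg T 2 1 ++ cu) (fg T 2 0 ++ drop (size (fg T 0 2)) w))
      (reach T 12 [:: fg T 0 1 ++ cv])
  | None => false
  end.

Definition consistent (t : nat * nat * nat) : bool :=
  let: (a, b, c) := t in
  [&& a != 0, b != 0, c != 0 & ~~ [&& a == 1, b == 1 & c == 1]].

Definition all_triples := flatten (map (fun a => flatten (map (fun b => map (fun c => (a,b,c)) (iota 0 3)) (iota 0 3))) (iota 0 3)).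



Lemma all_cube_ok : all (fun t => consistent t ==> cube_ok t) all_triples.
Proof. by vm_compute. Qed.

Definition step tf (u v : word) :=
  exists p l r s, [/\ u = p ++ l ++ s, v = p ++ r ++ s & rel_t tf l r].
Inductive rtc tf : word -> word -> Prop :=
| rtc0 u : rtc tf u u
| rtcS u v w : step tf u v -> rtc tf v w -> rtc tf u w.

Lemma rtc_trans tf u v w : rtc tf u v -> rtc tf v w -> rtc tf u w.
Proof. by elim=> // {}u {}v w' H _ IH /IH; apply: rtcS. Qed.

Lemma rtc1 tf u v : step tf u v -> rtc tf u v.
Proof. by move=> H; apply: rtcS H (rtc0 _ _). Qed.

Lemma rel_sym tf l r : (forall a b, tf a b = tf b a) -> rel_t tf l r -> rel_t tf r l.
Proof.
move=> S.
case: l => [|a [|b [|c [|? ?]]]]; case: r => [|a' [|b' [|c' [|? ?]]]] //=.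
  by move=> /andP[/andP[E /eqP? ] /eqP?]; subst; rewrite S E !eqxx.
by move=> /andP[/andP[/andP[/andP[E /eqP?] /eqP?] /eqP?] /eqP?]; subst; rewrite S E !eqxx.
Qed.

Lemma step_sym tf u v : (forall a b, tf a b = tf b a) -> step tf u v -> step tf v u.
Proof. by move=> S [p [l [r [s [-> -> H]]]]]; exists p, r, l, s; split => //; apply: rel_sym. Qed.

Lemma rtc_sym tf u v : (forall a b, tf a b = tf b a) -> rtc tf u v -> rtc tf v u.
Proof.
move=> S; elim=> [w|{}u {}v w H _ IH]; first exact: rtc0.
by apply: rtc_trans IH (rtc1 (step_sym S H)).
Qed.

Lemma step_ctx tf x y u v : step tf u v -> step tf (x ++ u ++ y) (x ++ v ++ y).
Proof.
move=> [p [l [r [s [-> -> H]]]]]; exists (x ++ p), l, r, (s ++ y).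
by rewrite !catA.
Qed.

Lemma rtc_ctx tf x y u v : rtc tf u v -> rtc tf (x ++ u ++ y) (x ++ v ++ y).
Proof.
elim=> [w|{}u {}v w H _ IH]; first exact: rtc0.
exact: rtcS (step_ctx x y H) IH.
Qed.

Lemma rel_size tf l r : rel_t tf l r -> size l = size r.
Proof. by case: l => [|a [|b [|c [|? ?]]]]; case: r => [|a' [|b' [|c' [|? ?]]]]. Qed.

Lemma rtc_size tf u v : rtc tf u v -> size u = size v.
Proof.
elim=> // {}u {}v w [p [l [r [s [-> -> H]]]]] _ <-.
by rewrite !size_cat (rel_size H).
Qed.

Lemma rel_all tf (P : pred nat) l r : rel_t tf l r -> all P l -> all P r.
Proof.
case: l => [|a [|b [|c [|? ?]]]]; case: r => [|a' [|b' [|c' [|? ?]]]] //=.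
  by move=> /andP[/andP[_ /eqP<-] /eqP<-]; rewrite !andbT => /andP[-> ->].
move=> /andP[/andP[/andP[/andP[_ /eqP->] /eqP->] /eqP->] /eqP->].
by rewrite !andbT => /and3P[-> ->].
Qed.

Lemma rtc_all tf (P : pred nat) u v : rtc tf u v -> all P u -> all P v.
Proof.
elim=> // {}u {}v w [p [l [r [s [-> -> H]]]]] _ IH.
rewrite !all_cat => /andP[Hp /andP[/(rel_all H) Hl Hs]]; apply: IH.
by rewrite !all_cat Hp Hl Hs.
Qed.

Lemma rel_map tf1 tf2 (g : nat -> nat) l r :
  (forall a b, tf2 (g a) (g b) = tf1 a b) ->
  rel_t tf1 l r -> rel_t tf2 (map g l) (map g r).
Proof.
move=> G.
case: l => [|a [|b [|c [|? ?]]]]; case: r => [|a' [|b' [|c' [|? ?]]]] //=; rewrite G.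
  by move=> /andP[/andP[-> /eqP->] /eqP->]; rewrite !eqxx.
by move=> /andP[/andP[/andP[/andP[-> /eqP->] /eqP->] /eqP->] /eqP->]; rewrite !eqxx.
Qed.

Lemma rtc_map tf1 tf2 (g : nat -> nat) u v :
  (forall a b, tf2 (g a) (g b) = tf1 a b) ->
  rtc tf1 u v -> rtc tf2 (map g u) (map g v).
Proof.
move=> G; elim=> [w|{}u {}v w [p [l [r [s [-> -> H]]]]] _ IH]; first exact: rtc0.
apply: rtcS IH; exists (map g p), (map g l), (map g r), (map g s).
by rewrite !map_cat; split => //; apply: rel_map.
Qed.

Lemma nbrs_sound tf u w : w \in nbrs tf u -> step tf u w.
Proof.
elim: u w => [|a u IH] w //=.
rewrite mem_cat => /orP[].
  case: u IH => [|b u''] IH //.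
  rewrite mem_cat => /orP[].
    case: ifP => // E; rewrite inE => /eqP->.
    by exists [::], [:: a; b], [:: b; a], u''; split => //=; rewrite E !eqxx.
  case: u'' IH => [|a2 u3] IH //.
  case: ifP => // /andP[E /eqP E2]; rewrite inE => /eqP->; subst a2.
  by exists [::], [:: a; b; a], [:: b; a; b], u3; split => //=; rewrite E !eqxx.
move=> /mapP[w' /IH [p [l [r [s [-> -> H]]]]] ->].
by exists (a :: p), l, r, s.
Qed.

Lemma reach_sound tf k S w : w \in reach tf k S -> exists2 s, s \in S & rtc tf s w.
Proof.
elim: k S => [|k IH] S /=; first by move=> H; exists w => //; apply: rtc0.
move=> /IH [s']; rewrite mem_undup mem_cat => /orP[] Hs H; first by exists s'.
move: Hs => /flattenP [ns /mapP [s Hs ->] /nbrs_sound St].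
by exists s => //; apply: rtcS St H.
Qed.

Lemma peqb_sound tf k u v : peqb tf k u v -> rtc tf u v.
Proof. by move=> /reach_sound [s]; rewrite inE => /eqP->. Qed.

Definition peq := rtc aty.
Lemma aty_sym a b : aty a b = aty b a.
Proof. rewrite /aty eq_sym; case: ifP => //; by rewrite orbC. Qed.

Lemma peq_refl u : peq u u. Proof. exact: rtc0. Qed.
Lemma peq_sym u v : peq u v -> peq v u. Proof. exact: rtc_sym aty_sym. Qed.
Lemma peq_trans u v w : peq u v -> peq v w -> peq u w. Proof. exact: rtc_trans. Qed.

Add Parametric Relation : word peq
  reflexivity proved by peq_refl
  symmetry proved by peq_sym
  transitivity proved by peq_trans as peq_rel.

Lemma peq_catl x u v : peq u v -> peq (x ++ u) (x ++ v).
Proof. by move=> /(rtc_ctx x [::]); rewrite !cats0. Qed.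
Lemma peq_catr y u v : peq u v -> peq (u ++ y) (v ++ y).
Proof. by move=> /(rtc_ctx [::] y). Qed.

Add Parametric Morphism : (@cat nat) with signature peq ==> peq ==> peq as cat_mor.
Proof. by move=> x y H u v H'; apply: peq_trans (peq_catr _ H) (peq_catl _ H'). Qed.

Add Parametric Morphism (a : nat) : (cons a) with signature peq ==> peq as cons_mor.
Proof. by move=> x y H; apply: (peq_catl [:: a] H). Qed.

Lemma test a b c (H : peq [:: a; b] [:: b; a]) : peq ([:: c] ++ [:: a; b] ++ [:: c]) ([:: c; b; a; c]).
Proof. rewrite H. reflexivity. Qed.
#[export] Hint Resolve peq_refl : core.

Notation f := (fg aty).

Lemma aty0 a b : (aty a b == 0) = (a == b).
Proof. by rewrite /aty; case: ifP => // _; case: ifP. Qed.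

Lemma f_same x : f x x = [::].
Proof. by rewrite /fg /aty eqxx. Qed.

Lemma aty_le2 a b : aty a b < 3.
Proof. by rewrite /aty; case: ifP => //; case: ifP. Qed.

Lemma rel_f x y : peq (x :: f x y) (y :: f y x).
Proof.
rewrite /fg aty_sym; case: ifP => [E|E0].
  by move: E; rewrite aty0 => /eqP ->; reflexivity.
case: ifP => [E|E].
  apply: rtc1; exists [::], [:: x; y; x], [:: y; x; y], [::]; split => //=.
  by rewrite aty_sym E !eqxx.
apply: rtc1; exists [::], [:: x; y], [:: y; x], [::]; split => //=.
rewrite /= !eqxx !andbT aty_sym.
by move: (aty_le2 y x) E0 E; case: (aty y x) => [|[|[|?]]].
Qed.

Definition Lm m := forall x y a b, size a = m -> peq (x :: a) (y :: b) ->
  exists c, peq a (f x y ++ c) /\ peq b (f y x ++ c).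

Lemma cancel_lvl m : (forall m', m' < m -> Lm m') ->
  forall p e c, size (p ++ e) <= m -> peq (p ++ e) (p ++ c) -> peq e c.
Proof.
move=> IH; elim=> [|z p IHp] e c //= Hs H.
have [c0 []] := IH _ Hs (z) z (p ++ e) (p ++ c) erefl H.
rewrite f_same /= => H1 H2.
by apply: IHp; [apply: ltnW | rewrite H1 H2; reflexivity].
Qed.

Lemma Rev m (IH : forall m', m' < m -> Lm m') fuel u v cu cv :
  cmp aty fuel u v = Some (cu, cv) ->
  forall s t, peq (u ++ s) (v ++ t) -> size (u ++ s) <= m ->
  exists r, peq s (cu ++ r) /\ peq t (cv ++ r).
Proof.
elim: fuel u v cu cv => [|fuel IHf] u v cu cv //=.
case: u => [|x u'].
  by move=> [<- <-] s t /= H _; exists t; split.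
case: v => [|y v'].
  by move=> [<- <-] s t /= H _; exists s; split => //; symmetry.
case E1: (cmp aty fuel u' (f x y)) => [[a1 b1]|] //.
case E2: (cmp aty fuel v' (f y x)) => [[a2 b2]|] //.
case E3: (cmp aty fuel b1 b2) => [[a3 b3]|] // [<- <-] s t /= H Hs.
have [k [Hk1 Hk2]] := IH _ Hs x y (u' ++ s) (v' ++ t) erefl H.
have [r1 [Hr1 Hk1']] := IHf _ _ _ _ E1 _ _ Hk1 (ltnW Hs).
have Hs2 : size (v' ++ t) <= m.
  by have [E] := rtc_size H; rewrite -E ltnW.
have [r2 [Hr2 Hk2']] := IHf _ _ _ _ E2 _ _ Hk2 Hs2.
have Hb : peq (b1 ++ r1) (b2 ++ r2) by rewrite -Hk1' -Hk2'.
have Hsb : size (b1 ++ r1) <= m.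
  rewrite -(rtc_size Hk1'); apply: leq_trans (ltnW Hs).
  by rewrite (rtc_size Hk1) size_cat leq_addl.
have [r [Hr Hr']] := IHf _ _ _ _ E3 _ _ Hb Hsb.
exists r; split; first by rewrite Hr1 Hr catA.
by rewrite Hr2 Hr' catA.
Qed.

Lemma fg_map tf1 tf2 (g : nat -> nat) a b :
  (forall a b, tf2 (g a) (g b) = tf1 a b) -> fg tf2 (g a) (g b) = map g (fg tf1 a b).
Proof. by move=> G; rewrite /fg G; case: ifP => //; case: ifP. Qed.

Lemma cmp_map tf1 tf2 (g : nat -> nat) fuel u v :
  (forall a b, tf2 (g a) (g b) = tf1 a b) ->
  cmp tf2 fuel (map g u) (map g v) =
  omap (fun p => (map g p.1, map g p.2)) (cmp tf1 fuel u v).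
Proof.
move=> G; elim: fuel u v => [|fuel IH] u v //=.
case: u => [|x u'] //=; case: v => [|y v'] //=.
rewrite !(@fg_map tf1 tf2 g _ _ G) !IH.
case: (cmp tf1 fuel u' (fg tf1 x y)) => [[a1 b1]|] //=.
case: (cmp tf1 fuel v' (fg tf1 y x)) => [[a2 b2]|] //=.
rewrite IH; case: (cmp tf1 fuel b1 b2) => [[a3 b3]|] //=.
by rewrite !map_cat.
Qed.

Definition iota3 (x y z a : nat) := if a is 0 then x else if a is 1 then y else z.

Lemma iota3_ty x y z a b :
  aty (iota3 x y z a) (iota3 x y z b) = Ttr (aty x y, aty y z, aty x z) a b.
Proof.
rewrite /Ttr.
case: a => [|[|a]]; case: b => [|[|b]] //=; rewrite ?(aty_sym y x) ?(aty_sym z x)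
  ?(aty_sym z y) //; by rewrite /aty eqxx.
Qed.



Lemma not_tri x y z : aty x y = 1 -> aty y z = 1 -> aty x z = 1 -> False.
Proof.
rewrite /aty; case: eqP => // _; case: ifP => // /orP H1 _.
case: eqP => // _; case: ifP => // /orP H2 _.
case: eqP => // _; case: ifP => // /orP H3 _.
move: H1 H2 H3 => [] /eqP H1 [] /eqP H2 [] /eqP H3; lia.
Qed.


Lemma cube_actual x y z : aty x y != 0 -> aty y z != 0 -> aty x z != 0 ->
  exists cu cv W, [/\ cmp aty 30 (f y z) (f y x) = Some (cu, cv),
    peq (f x y ++ cv) (f x z ++ W) & peq (f z y ++ cu) (f z x ++ W)].
Proof.
move=> H1 H2 H3.
set t := (aty x y, aty y z, aty x z).
have Ht : t \in all_triples.
  rewrite /t /all_triples.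
  have := aty_le2 x y; have := aty_le2 y z; have := aty_le2 x z.
  case: (aty x y) => [|[|[|?]]] //; case: (aty y z) => [|[|[|?]]] //;
  case: (aty x z) => [|[|[|?]]] //.
have Hc : consistent t.
  rewrite /consistent /t H1 H2 H3 /=.
  apply/negP => /and3P[/eqP E1 /eqP E2 /eqP E3]; exact: not_tri E1 E2 E3.
have := allP all_cube_ok t Ht; rewrite Hc implyTb /cube_ok.
set g := iota3 x y z.
have G : forall a b, aty (g a) (g b) = Ttr t a b by move=> a b; apply: iota3_ty.
have Ef : forall a b, f (g a) (g b) = map g (fg (Ttr t) a b) by move=> a b; apply: fg_map.
have Ecmp : cmp aty 30 (f y z) (f y x) = omap (fun p => (map g p.1, map g p.2))
   (cmp (Ttr t) 30 (fg (Ttr t) 1 2) (fg (Ttr t) 1 0)).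
  by rewrite -(cmp_map _ _ _ G) -!Ef.
case E: (cmp (Ttr t) 30 (fg (Ttr t) 1 2) (fg (Ttr t) 1 0)) Ecmp => [[cu cv]|] // Ecmp.
move=> /hasP [w /reach_sound [s0]]; rewrite inE => /eqP -> Hw /andP[/eqP Hp Hq].
exists (map g cu), (map g cv), (map g (drop (size (fg (Ttr t) 0 2)) w)); split => //.
  have := rtc_map G Hw; rewrite map_cat -(Ef 0 1) => ->.
  by rewrite -[in X in map g X](cat_take_drop (size (fg (Ttr t) 0 2)) w) Hp map_cat -(Ef 0 2).
by have := rtc_map G (peqb_sound Hq); rewrite !map_cat -(Ef 2 1) -(Ef 2 0).
Qed.

Lemma f1 a b : aty a b = 1 -> f a b = [:: b; a].
Proof. by rewrite /fg => ->. Qed.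
Lemma f2 a b : aty a b = 2 -> f a b = [:: b].
Proof. by rewrite /fg => ->. Qed.

Lemma front m (IH : forall m', m' < m -> Lm m') x y z a c e :
  aty y z != 0 -> size (f y z ++ e) = m -> peq a (f x y ++ c) ->
  peq (f y z ++ e) (f y x ++ c) ->
  exists c', peq a (f x z ++ c') /\ peq (f z y ++ e) (f z x ++ c').
Proof.
move=> Hyz Hs Ha H.
case: (x =P y) => [E|nxy].
  subst x; exists e; split => //.
  by rewrite Ha H.
case: (x =P z) => [E|nxz].
  subst x; exists a; rewrite f_same; split => //.
  have Hec : peq e c.
    by apply: (cancel_lvl IH (p := f y z)); [rewrite Hs | exact: H].
  by rewrite Ha Hec.
have Hxy : aty x y != 0 by rewrite aty0; apply/eqP.
have Hxz : aty x z != 0 by rewrite aty0; apply/eqP.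
have [cu [cv [W [E1 E2 E3]]]] := cube_actual Hxy Hyz Hxz.
have [r [Hr1 Hr2]] := Rev IH E1 H (eq_leq Hs).
exists (W ++ r); split.
  by rewrite Ha Hr2 catA E2 catA.
by rewrite Hr1 catA E3 catA.
Qed.

Definition Inv x a w := forall y b, w = y :: b ->
  exists c, peq a (f x y ++ c) /\ peq b (f y x ++ c).

Lemma inv_step m (IH : forall m', m' < m -> Lm m') x a w1 w2 :
  step aty w1 w2 -> size w1 = m.+1 -> Inv x a w1 -> Inv x a w2.
Proof.
move=> [p [l [r [s [-> -> Hr]]]]] Hsz HI y2 b2.
case: p Hsz HI => [|y p] /= Hsz HI.
  case: l r Hr Hsz HI => [|a1 [|b1 [|c1 [|? ?]]]] [|a' [|b' [|c' [|? ?]]]] //=.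
    move=> /andP[/andP[/eqP E /eqP <-] /eqP <-] Hsz HI [<- <-].
    have [c [Ha Hb]] := HI a1 (b1 :: s) erefl.
    have Ef : f a1 b1 = [:: b1] by apply: f2.
    have Ef' : f b1 a1 = [:: a1] by apply: f2; rewrite aty_sym.
    have := @front m IH x a1 b1 a c s; rewrite Ef Ef'; apply => //.
      by rewrite E.
    by case: Hsz.
  move=> /andP[/andP[/andP[/andP[/eqP E /eqP ->] /eqP ->] /eqP ->] /eqP ->].
  move=> Hsz HI [<- <-].
  have [c [Ha Hb]] := HI a1 (b1 :: a1 :: s) erefl.
  have Ef : f a1 b1 = [:: b1; a1] by apply: f1.
  have Ef' : f b1 a1 = [:: a1; b1] by apply: f1; rewrite aty_sym.
  have := @front m IH x a1 b1 a c s; rewrite Ef Ef'; apply => //.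
    by rewrite E.
  by case: Hsz.
move=> [<- <-].
have [c [Ha Hb]] := HI y (p ++ l ++ s) erefl.
exists c; split => //; rewrite -Hb.
by apply: rtc1; exists p, r, l, s; split => //; exact: rel_sym aty_sym Hr.
Qed.

Lemma L_step m : (forall m', m' < m -> Lm m') -> Lm m.
Proof.
move=> IH x y a b Hs H.
have Hinv : forall w1 w2, rtc aty w1 w2 -> size w1 = m.+1 -> Inv x a w1 -> Inv x a w2.
  move=> w1 w2; elim=> // {}w1 {}w2 w3 St _ IHr Hsz HI.
  apply: IHr; first by rewrite -(rtc_size (rtc1 St)).
  exact: (inv_step IH St Hsz HI).
apply: (Hinv _ _ H) => //=; first by rewrite Hs.
by move=> y' b' [<- <-]; exists a; rewrite f_same.
Qed.

Lemma L_all m : Lm m.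
Proof.
elim: m {-2}m (leqnn m) => [|M IHM] m Hm.
  by apply: L_step => m'; rewrite leqn0 in Hm; rewrite (eqP Hm).
apply: L_step => m' Hm'; apply: IHM; rewrite -ltnS; exact: leq_trans Hm' Hm.
Qed.

Lemma L x y a b : peq (x :: a) (y :: b) ->
  exists c, peq a (f x y ++ c) /\ peq b (f y x ++ c).
Proof. exact: L_all. Qed.

Lemma lcancel p e c : peq (p ++ e) (p ++ c) -> peq e c.
Proof.
move=> H; apply: (cancel_lvl (m := size (p ++ e)) _ (p := p)) => //.
by move=> m' _; apply: L_all.
Qed.

Lemma rel_rev l r : rel_t aty l r -> rel_t aty (rev l) (rev r).
Proof.
case: l => [|a [|b [|c [|? ?]]]]; case: r => [|a' [|b' [|c' [|? ?]]]] //=.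
  by move=> /andP[/andP[E /eqP? ] /eqP?]; subst; rewrite /rev /= aty_sym E !eqxx.
by move=> /andP[/andP[/andP[/andP[E /eqP?] /eqP?] /eqP?] /eqP?]; subst; rewrite /rev /= E !eqxx.
Qed.

Lemma peq_rev u v : peq u v -> peq (rev u) (rev v).
Proof.
elim=> // {}u {}v w [p [l [r [s [-> -> H]]]]] _ IH.
apply: rtcS IH; exists (rev s), (rev l), (rev r), (rev p).
by rewrite !rev_cat !catA; split => //; apply: rel_rev.
Qed.

Lemma rcancel p e c : peq (e ++ p) (c ++ p) -> peq e c.
Proof.
move=> /peq_rev; rewrite !rev_cat => /lcancel /peq_rev.
by rewrite !revK.
Qed.

Lemma G_lcm l : forall u v s t, peq (u ++ s) (v ++ t) -> size (u ++ s) <= l ->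
  exists cu cv, peq (u ++ cu) (v ++ cv) /\
   forall s' t', peq (u ++ s') (v ++ t') -> exists r, peq s' (cu ++ r) /\ peq t' (cv ++ r).
Proof.
elim: l => [|l IHl] u v s t.
  case: u => [|x u] /=.
    move=> _ _; exists v, [::]; rewrite cats0; split => // s' t' H.
    by exists t'.
  by [].
case: u => [|x u'] /=.
  move=> _ _; exists v, [::]; rewrite cats0; split => // s' t' H.
  by exists t'.
case: v => [|y v'] /=.
  move=> _ _; exists [::], (x :: u'); rewrite cats0; split => // s' t' H.
  by exists s'; split => //; symmetry.
move=> H Hs.
have [k [Hk1 Hk2]] := L H.
have Hs2 : size (v' ++ t) <= l.
  by have [E] := rtc_size H; rewrite -E.
have [a1 [b1 [C1 U1]]] := IHl _ _ _ _ Hk1 Hs.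
have [a2 [b2 [C2 U2]]] := IHl _ _ _ _ Hk2 Hs2.
have [r1 [Hr1 Hk1']] := U1 _ _ Hk1.
have [r2 [Hr2 Hk2']] := U2 _ _ Hk2.
have Hb : peq (b1 ++ r1) (b2 ++ r2) by rewrite -Hk1' -Hk2'.
have Hsb : size (b1 ++ r1) <= l.
  rewrite -(rtc_size Hk1'); apply: (@leq_trans (size (u' ++ s))) => //.
  by rewrite (rtc_size Hk1) size_cat leq_addl.
have [a3 [b3 [C3 U3]]] := IHl _ _ _ _ Hb Hsb.
exists (a1 ++ a3), (a2 ++ b3); split.
  have E1 : peq (x :: u' ++ a1 ++ a3) (x :: f x y ++ b1 ++ a3).
    by rewrite catA C1 -catA.
  have E2 : peq (x :: f x y ++ b1 ++ a3) (y :: f y x ++ b1 ++ a3).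
    exact: (peq_catr (b1 ++ a3) (rel_f x y)).
  have E4 : peq (y :: f y x ++ b2 ++ b3) (y :: v' ++ a2 ++ b3).
    by rewrite catA -C2 -catA.
  by rewrite E1 E2 C3 E4.
move=> s' t' H'.
have [k' [Hk1'' Hk2'']] := L H'.
have [q1 [Hq1 Hq1']] := U1 _ _ Hk1''.
have [q2 [Hq2 Hq2']] := U2 _ _ Hk2''.
have Hb' : peq (b1 ++ q1) (b2 ++ q2) by rewrite -Hq1' -Hq2'.
have [r [Hr Hr']] := U3 _ _ Hb'.
by exists r; split; [rewrite Hq1 Hr catA | rewrite Hq2 Hr' catA].
Qed.

Definition pre (u w : word) := exists x, peq w (u ++ x).

Definition is_lcm (S : word -> Prop) (c : word) :=
  (forall s, S s -> pre s c) /\ (forall d, (forall s, S s -> pre s d) -> pre c d).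

Lemma pre_trans a b c : pre a b -> pre b c -> pre a c.
Proof. by move=> [x Hx] [y Hy]; exists (x ++ y); rewrite Hy Hx catA. Qed.

Lemma pre_peq a b c : peq b c -> pre a b -> pre a c.
Proof. by move=> E [x Hx]; exists x; rewrite -E. Qed.

Lemma pre_peql a b c : peq a b -> pre a c -> pre b c.
Proof. by move=> E [x Hx]; exists x; rewrite -E. Qed.

Lemma pre_refl a : pre a a.
Proof. by exists [::]; rewrite cats0. Qed.

Lemma lcm_unique S c c' : is_lcm S c -> is_lcm S c' -> peq c c'.
Proof.
move=> [H1 H2] [H1' H2'].
have [x Hx] := H2' c H1.
have [y Hy] := H2 c' H1'.
have E : peq (c ++ [::]) (c ++ (y ++ x)) by rewrite cats0 catA -Hy -Hx.
have Es := rtc_size E; rewrite !size_cat /= addn0 in Es.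
have : size (y ++ x) = 0 by rewrite size_cat; lia.
move/eqP; rewrite size_cat addn_eq0 size_eq0 => /andP[/eqP Ey _].
by rewrite Ey cats0 in Hy; symmetry.
Qed.

Lemma lcm_ext S S' c :
  (forall w, S w -> exists2 w', S' w' & peq w w') ->
  (forall w', S' w' -> exists2 w, S w & peq w w') ->
  is_lcm S c -> is_lcm S' c.
Proof.
move=> HS HS' [H1 H2]; split.
  by move=> w' /HS' [w /H1 Hw E]; apply: pre_peql Hw.
move=> d Hd; apply: H2 => w /HS [w' /Hd Hw' E].
by apply: pre_peql Hw'; symmetry.
Qed.

Lemma lcm_mul S c p : is_lcm S c -> (exists s, S s) ->
  is_lcm (fun w => exists2 s, S s & w = p ++ s) (p ++ c).
Proof.
move=> [H1 H2] [s0 Hs0]; split.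
  by move=> w [s /H1 [x Hx] ->]; exists x; rewrite Hx catA.
move=> d Hd.
have [x0 Hx0] := Hd _ (ex_intro2 _ _ s0 Hs0 erefl).
have [y Hy] : pre c (s0 ++ x0).
  apply: H2 => s Hs.
  have [z Hz] := Hd _ (ex_intro2 _ _ s Hs erefl).
  have : peq (p ++ (s0 ++ x0)) (p ++ (s ++ z)) by rewrite catA -Hx0 Hz catA.
  move/lcancel => E; exists z; exact: E.
by exists y; rewrite Hx0 -catA Hy catA.
Qed.

Definition pw (w : word) k : word := flatten (nseq k w).

Lemma pwD w a b : pw w (a + b) = pw w a ++ pw w b.
Proof. by rewrite /pw nseqD flatten_cat. Qed.
Lemma pwS w a : pw w a.+1 = w ++ pw w a.
Proof. by []. Qed.
Lemma pw0 w : pw w 0 = [::]. Proof. by []. Qed.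

Lemma comm_pw D p : peq (D ++ p) (p ++ D) -> forall i, peq (D ++ pw p i) (pw p i ++ D).
Proof.
move=> H; elim=> [|i IH]; first by rewrite /= cats0.
by rewrite pwS catA H -catA IH catA.
Qed.

Lemma lcm_fin (q : nat -> word) M0 j : (forall i, i < j -> pre (q i) M0) ->
  exists c, is_lcm (fun w => exists2 i, i < j & w = q i) c.
Proof.
elim: j => [|j IH] Hq.
  exists [::]; split; first by move=> s [].
  by move=> d _; exists d.
have [c [Hc1 Hc2]] := IH (fun i Hi => Hq i (ltnW Hi)).
have [s Hs] : pre c M0 by apply: Hc2 => w [i Hi ->]; apply: Hq; apply: ltnW.
have [t Ht] := Hq j (ltnSn j).
have Hst : peq (c ++ s) (q j ++ t) by rewrite -Hs -Ht.
have [cu [cv [C U]]] := G_lcm Hst (leqnn _).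
exists (c ++ cu); split.
  move=> w [i]; rewrite ltnS leq_eqVlt => /orP[/eqP-> ->|Hi ->].
    by exists cv; rewrite C.
  by apply: pre_trans (Hc1 _ (ex_intro2 _ _ i Hi erefl)) _; exists cu.
move=> d Hd.
have [s' Hs'] : pre c d by apply: Hc2 => w [i Hi ->]; apply: Hd; exists i => //; apply: ltnW.
have [t' Ht'] := Hd (q j) (ex_intro2 _ _ j (ltnSn j) erefl).
have [r [Hr _]] : exists r, peq s' (cu ++ r) /\ peq t' (cv ++ r).
  by apply: U; rewrite -Hs' -Ht'.
by exists r; rewrite Hs' Hr catA.
Qed.

Lemma torsion p Dr K M0 : 0 < K -> peq (Dr ++ p) (p ++ Dr) ->
  peq (pw p K) (pw Dr K) ->
  (forall i, i <= K -> pre (pw p i ++ pw Dr (K - i)) M0) -> peq p Dr.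
Proof.
move=> K0 Hc HK HM.
pose q i := pw p i ++ pw Dr (K - i).
have Hstep : forall i, i < K -> peq (p ++ q i) (Dr ++ q i.+1).
  move=> i Hi; rewrite /q.
  have -> : K - i = (K - i.+1).+1 by lia.
  have -> : p ++ (pw p i ++ pw Dr (K - i.+1).+1) = (pw p i.+1 ++ Dr) ++ pw Dr (K - i.+1).
    by rewrite !pwS !catA.
  by rewrite -(comm_pw Hc i.+1) -catA.
have HqK : peq (q K) (q 0) by rewrite /q subnn subn0 /= cats0 HK.
have [c Hc'] := @lcm_fin q M0 K (fun i Hi => HM i (ltnW Hi)).
have Hne : exists s, (fun w => exists2 i, i < K & w = q i) s by exists (q 0), 0.
have H1 := lcm_mul p Hc' Hne.
have H2 := lcm_mul Dr Hc' Hne.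
have H1' : is_lcm (fun w => exists2 s, (exists2 i, i < K & s = q i) & w = Dr ++ s) (p ++ c).
  apply: lcm_ext H1.
    move=> w [s [i Hi ->] ->].
    case: (ltnP i.+1 K) => Hi1.
      by exists (Dr ++ q i.+1); [exists (q i.+1) => //; exists i.+1 | apply: Hstep].
    have Ei : i.+1 = K by apply/eqP; rewrite eqn_leq Hi1 Hi.
    exists (Dr ++ q 0); first by exists (q 0) => //; exists 0.
    by rewrite Hstep // Ei HqK.
  move=> w [s [i Hi ->] ->].
  case: i Hi => [|i] Hi.
    exists (p ++ q K.-1); first by exists (q K.-1) => //; exists K.-1 => //; lia.
    rewrite Hstep; last by lia.
    by rewrite prednK // HqK.
  exists (p ++ q i); first by exists (q i) => //; exists i => //; lia.
  by rewrite Hstep; last by lia.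
have := lcm_unique H1' H2.
by move/rcancel.
Qed.

Lemma comm2 a b : aty a b = 2 -> peq [:: a; b] [:: b; a].
Proof.
move=> H; apply: rtc1; exists [::], [:: a; b], [:: b; a], [::]; split => //=.
by rewrite H !eqxx.
Qed.
Lemma braid3 a b : aty a b = 1 -> peq [:: a; b; a] [:: b; a; b].
Proof.
move=> H; apply: rtc1; exists [::], [:: a; b; a], [:: b; a; b], [::]; split => //=.
by rewrite H !eqxx.
Qed.

Lemma aty2 a b : (b.+1 < a) || (a.+1 < b) -> aty a b = 2.
Proof.
move=> H; rewrite /aty; case: eqP => [E|_]; first by subst; lia.
case: ifP => // /orP [] /eqP E; subst; lia.
Qed.
Lemma aty1 a : aty a a.+1 = 1.
Proof. rewrite /aty eqxx; case: eqP => //; lia. Qed.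

Definition far a b := (b.+1 < a) || (a.+1 < b).

Lemma comm_far a w : all (far a) w -> peq (a :: w) (w ++ [:: a]).
Proof.
elim: w => [|b w IH] //= /andP[Hb Hw].
rewrite -(IH Hw).
have := peq_catr w (comm2 (aty2 Hb)); by [].
Qed.

Lemma comm_far' a w : all (far a) w -> peq (w ++ [:: a]) (a :: w).
Proof. by move=> H; symmetry; apply: comm_far. Qed.

Fixpoint R n : word := if n is n'.+1 then n :: R n' else [::].
Fixpoint Dl n : word := if n is n'.+1 then Dl n' ++ R n' else [::].
Definition Sh (w : word) : word := map succn w.

Definition inr lo hi (a : nat) := (lo <= a) && (a <= hi).

Lemma R_rng n : all (inr 1 n) (R n).
Proof.
elim: n => [|n IH] //=; rewrite /inr leqnn andbT /=.
by apply: sub_all IH => a /andP[-> /= H]; apply: leqW.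
Qed.

Lemma all_far a lo hi w : all (inr lo hi) w -> (hi.+1 < a) || (a.+1 < lo) -> all (far a) w.
Proof. by move=> H Ha; apply: sub_all H => b /andP[H1 H2]; rewrite /far; lia. Qed.

Lemma peq_Sh u v : peq u v -> peq (Sh u) (Sh v).
Proof. by apply: rtc_map => a b; rewrite /aty !eqSS. Qed.

Add Parametric Morphism : Sh with signature peq ==> peq as Sh_mor.
Proof. exact: peq_Sh. Qed.

Lemma RB n i : 0 < i < n -> peq (i :: R n) (R n ++ [:: i.+1]).
Proof.
elim: n i => [|n IH] i Hi; first lia.
rewrite /=.
case: (ltnP i n) => Hin.
  have Hf : ((n.+1).+1 < i) || (i.+1 < n.+1) by lia.
  have E1 : peq (i :: n.+1 :: R n) (n.+1 :: i :: R n).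
    exact: (peq_catr (R n) (comm2 (aty2 Hf))).
  by rewrite E1 IH //; lia.
have -> : i = n by lia.
case: n IH Hi Hin => [|n] IH Hi Hin; first lia.
rewrite /=.
have E1 : peq [:: n.+1, n.+2, n.+1 & R n] [:: n.+2, n.+1, n.+2 & R n].
  exact: (peq_catr (R n) (braid3 (aty1 _))).
rewrite E1.
have := peq_catl [:: n.+2; n.+1] (comm_far (all_far (R_rng n) _)).
by apply; lia.
Qed.

Lemma RBw n w : all (inr 1 n.-1) w -> 0 < n -> peq (w ++ R n) (R n ++ Sh w).
Proof.
move=> + Hn; elim: w => [|a w IH] /=; first by rewrite cats0.
move=> /andP[Ha Hw].
rewrite (IH Hw) -cat_cons (RB (i := a)); last by move: Ha; rewrite /inr; lia.
by rewrite -catA.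
Qed.

Lemma Sh_rng lo hi w : all (inr lo hi) w -> all (inr lo.+1 hi.+1) (Sh w).
Proof. by rewrite all_map; apply: sub_all => a. Qed.

Lemma Dl_rng n : all (inr 1 n.-1) (Dl n).
Proof.
elim: n => [|n IH] //=; rewrite all_cat; apply/andP; split.
  by apply: sub_all IH => a; rewrite /inr; lia.
by case: n {IH} => // n; apply: R_rng.
Qed.

Lemma DC n : peq (Dl n.+1) (R n ++ Sh (Dl n)).
Proof.
elim: n => [|n IH] //.
have -> : Dl n.+2 = Dl n.+1 ++ R n.+1 by [].
rewrite IH -catA (RBw (n := n.+1)) //; last first.
  by apply: sub_all (Sh_rng (Dl_rng n)) => a; rewrite /inr; lia.
rewrite catA (RBw (n := n.+1)) // ?R_rng //.
rewrite /Sh map_cat catA; reflexivity.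
Qed.

Lemma Kn n : peq (R n ++ R n.+1 ++ [:: 1]) (n.+1 :: R n ++ R n.+1).
Proof.
elim: n => [|n IH] //.
have E1 : peq (R n ++ [:: n.+2]) (n.+2 :: R n).
  by apply: comm_far'; apply: (all_far (R_rng n)); lia.
transitivity ([:: n.+1; n.+2] ++ (R n ++ R n.+1 ++ [:: 1])).
  have -> : R n.+1 ++ R n.+2 ++ [:: 1] = n.+1 :: (R n ++ [:: n.+2]) ++ (R n.+1 ++ [:: 1]).
    by rewrite /= -catA.
  by rewrite E1.
rewrite IH.
transitivity ([:: n.+2; n.+1; n.+2] ++ R n ++ R n.+1).
  exact: (peq_catr (R n ++ R n.+1) (braid3 (aty1 _))).
have -> : n.+2 :: R n.+1 ++ R n.+2 = [:: n.+2; n.+1] ++ (R n ++ [:: n.+2]) ++ R n.+1.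
  by rewrite /= -catA.
by rewrite E1.
Qed.

Lemma DD k : peq (Dl k.+2) (R k ++ R k.+1 ++ Sh (Sh (Dl k))).
Proof.
have -> : Dl k.+2 = Dl k.+1 ++ R k.+1 by [].
rewrite DC -catA (RBw (n := k.+1)) //.
by apply: sub_all (Sh_rng (Dl_rng k)) => a; rewrite /inr; lia.
Qed.

Lemma Tw n i : 0 < i < n -> peq (Dl n ++ [:: i]) ((n - i) :: Dl n).
Proof.
elim: n i => [|n IH] i Hi; first lia.
case: (ltnP 1 i) => Hi1.
  have -> : Dl n.+1 ++ [:: i] = Dl n ++ (R n ++ [:: (i.-1).+1]) by rewrite prednK ?catA //; lia.
  rewrite -RB; last by lia.
  rewrite -cat1s catA IH; last by lia.
  have -> : n - i.-1 = n.+1 - i by lia.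
  by [].
have -> : i = 1 by lia.
case: n IH Hi Hi1 => [|k] IH Hi Hi1; first lia.
rewrite DD -!catA (comm_far' (a := 1)); last first.
  apply: (all_far (Sh_rng (Sh_rng (Dl_rng k)))); lia.
have H := peq_catr (Sh (Sh (Dl k))) (Kn k).
rewrite -!catA /= in H.
by rewrite subn1 /= -catA in H *.
Qed.

Fixpoint cof n i : word :=
  if n is n'.+1 then (if i < n' then cof n' i ++ R n' else R n'.-1 ++ Sh (Dl n')) else [::].

Lemma cof_div n i : 0 < i < n -> peq (i :: cof n i) (Dl n).
Proof.
elim: n i => [|n IH] i Hi; first lia.
rewrite /=; case: ifP => Hin.
  by rewrite -cat_cons IH //; lia.
have Ei : i = n by lia.
subst i; case: n IH Hi Hin => [|n] IH Hi Hin; first lia.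
by symmetry; exact: (DC n.+1).
Qed.

Definition D2 n := Dl n ++ Dl n.

Lemma D2c n i : 0 < i < n -> peq (D2 n ++ [:: i]) (i :: D2 n).
Proof.
move=> Hi; rewrite /D2 -catA Tw // -cat1s catA Tw; last by lia.
by have -> : n - (n - i) = i by lia.
Qed.

Lemma D2w n w : all (inr 1 n.-1) w -> peq (D2 n ++ w) (w ++ D2 n).
Proof.
elim: w => [|a w IH] /=; first by rewrite cats0.
move=> /andP[Ha Hw].
have -> : D2 n ++ a :: w = (D2 n ++ [:: a]) ++ w by rewrite -catA.
rewrite D2c; last by move: Ha; rewrite /inr; lia.
by rewrite /= IH.
Qed.

Definition star n i := cof n i ++ Dl n.

Lemma star1 n i : 0 < i < n -> peq (i :: star n i) (D2 n).
Proof. by move=> Hi; rewrite /star -cat_cons cof_div. Qed.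

Lemma star2 n i : 0 < i < n -> peq (star n i ++ [:: i]) (D2 n).
Proof.
move=> Hi; apply: (@lcancel [:: i]).
by rewrite /= -cat_cons star1 // D2c.
Qed.

Lemma star_rng n i : 0 < i < n -> all (inr 1 n.-1) (star n i).
Proof.
move=> Hi; have := rtc_all (P := inr 1 n.-1) (peq_sym (star1 Hi)).
rewrite /D2 all_cat Dl_rng /= => /(_ erefl) /andP[_ ->] //.
Qed.

Lemma pre_pw n w : all (inr 1 n.-1) w -> pre w (pw (D2 n) (size w)).
Proof.
elim: w => [|i w IH] /=; first by move=> _; exists [::].
move=> /andP[Hi /IH [x Hx]].
have Hi' : 0 < i < n by move: Hi; rewrite /inr; lia.
exists (x ++ star n i).
have Hc : peq (star n i ++ D2 n) (D2 n ++ star n i) by symmetry; apply: D2w; apply: star_rng.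
rewrite pwS.
transitivity ((i :: star n i) ++ pw (D2 n) (size w)).
  exact: peq_catr _ (peq_sym (star1 Hi')).
rewrite /= (comm_pw Hc) Hx -catA; reflexivity.
Qed.

Lemma pre_pw_mono w D a b : pre w (pw D a) -> a <= b -> pre w (pw D b).
Proof.
move=> [x Hx] Hab; exists (x ++ pw D (b - a)).
by rewrite -{1}(subnKC Hab) pwD Hx -catA.
Qed.

Add Parametric Relation n : bword (braid_eq n)
  reflexivity proved by (@beq_refl n)
  symmetry proved by (@beq_sym n)
  transitivity proved by (@beq_trans n) as beq_setoid.

#[export] Hint Resolve beq_refl : core.

Lemma beq_ctx n x y u v : braid_eq n u v -> braid_eq n (x ++ u ++ y) (x ++ v ++ y).
Proof.
elim=> [u' l r v' H|w|w1 w2 _ IH|w1 w2 w3 _ IH1 _ IH2].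
- have -> : x ++ (u' ++ l ++ v') ++ y = (x ++ u') ++ l ++ (v' ++ y) by rewrite !catA.
  have -> : x ++ (u' ++ r ++ v') ++ y = (x ++ u') ++ r ++ (v' ++ y) by rewrite !catA.
  exact: beq_rel.
- reflexivity.
- by symmetry.
- by rewrite IH1.
Qed.

Add Parametric Morphism n : (@cat letter) with signature
  (braid_eq n) ==> (braid_eq n) ==> (braid_eq n) as bcat_mor.
Proof.
move=> x y H u v H'.
transitivity (y ++ u).
  by have := beq_ctx [::] u H; rewrite /=.
by have := beq_ctx y [::] H'; rewrite !cats0.
Qed.

Add Parametric Morphism n (a : letter) : (cons a) with signature
  (braid_eq n) ==> (braid_eq n) as bcons_mor.
Proof. by move=> x y H; rewrite -[a :: x]cat1s -[a :: y]cat1s H. Qed.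

Lemma rel_ok n l r : braid_rel n l r -> word_ok n l && word_ok n r.
Proof. by case=> [i b|i j|i j] /=; rewrite /sig /= => -> // ->. Qed.

Lemma beq_ok n u v : braid_eq n u v -> word_ok n u = word_ok n v.
Proof.
elim=> [u' l r v' /rel_ok /andP[H1 H2]|w|w1 w2 _ E|w1 w2 w3 _ E1 _ E2] //.
- by rewrite /word_ok !all_cat -!/(word_ok n _) H1 H2.
- by rewrite E1 E2.
Qed.

Lemma ok_inr n i : gen_ok n i = inr 1 n.-1 i.
Proof. by rewrite /gen_ok /inr; apply/idP/idP => /andP[H1 H2]; apply/andP; split; lia. Qed.

Definition pos (w : word) : bword := map (fun i => (i, true)) w.

Lemma pos_cat u v : pos (u ++ v) = pos u ++ pos v. Proof. exact: map_cat. Qed.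

Lemma peq_beq n u v : peq u v -> all (inr 1 n.-1) u -> braid_eq n (pos u) (pos v).
Proof.
elim=> [w|{}u {}v w [p [l [r [s [-> -> H]]]]] St IH] Hu; first reflexivity.
have St' : rtc aty (p ++ l ++ s) (p ++ r ++ s) by apply: rtc1; exists p, l, r, s.
rewrite -IH; last exact: (rtc_all St' Hu).
rewrite !pos_cat; apply: beq_rel.
move: Hu; rewrite !all_cat => /andP[_ /andP[Hl _]]; clear St St' IH.
case: l r H Hl => [|a [|b [|c [|? ?]]]] [|a' [|b' [|c' [|? ?]]]] //=.
  move=> /andP[/andP[E /eqP<-] /eqP<-]; rewrite andbT => /andP[Ha Hb].
  apply: rel_comm; rewrite ?ok_inr //.
  move: E; rewrite /aty; case: (a =P b) => // ?; case: (a.+1 =P b) => //= ?.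
  case: (b.+1 =P a) => //= ? _; lia.
move=> /andP[/andP[/andP[/andP[E /eqP->] /eqP->] /eqP->] /eqP->].
rewrite andbT => /and3P[Ha Hb _].
apply: rel_braid; rewrite ?ok_inr //.
move: E; rewrite /aty; case: (a =P b) => // ?; case: (a.+1 =P b) => //= ?.
  by move=> _; apply/orP; left; apply/eqP.
by case: (b.+1 =P a) => //= ? _; apply/orP; right; apply/eqP.
Qed.

Definition PL n (a : letter) : word := if a.2 then [:: a.1] else star n a.1.
Definition RL (a : letter) : nat := if a.2 then 0 else 1.
Definition P n (w : bword) : word := flatten (map (PL n) w).
Definition Rw (w : bword) : nat := sumn (map RL w).

Lemma P_cat n u v : P n (u ++ v) = P n u ++ P n v.
Proof. by rewrite /P map_cat flatten_cat. Qed.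
Lemma Rw_cat u v : Rw (u ++ v) = Rw u + Rw v.
Proof. by rewrite /Rw map_cat sumn_cat. Qed.

Lemma P_rng n w : word_ok n w -> all (inr 1 n.-1) (P n w).
Proof.
elim: w => [|[i b] w IH] //= /andP[Hi Hw].
rewrite /P /= all_cat -/(P n w) IH // andbT /PL /=.
rewrite ok_inr in Hi; case: b => /=; first by rewrite Hi.
by apply: star_rng; move: Hi; rewrite /inr; lia.
Qed.

Lemma pw_comm D a b : pw D a ++ pw D b = pw D b ++ pw D a.
Proof. by rewrite -!pwD addnC. Qed.

Lemma D2pw_comm n k w : all (inr 1 n.-1) w -> peq (pw (D2 n) k ++ w) (w ++ pw (D2 n) k).
Proof.
move=> Hw; elim: k => [|k IH] /=; first by rewrite cats0.
by rewrite -catA IH catA D2w // -catA.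
Qed.

Definition Vr n a b := peq (pw (D2 n) (Rw b) ++ P n a) (pw (D2 n) (Rw a) ++ P n b).

Lemma Vr_sym n a b : Vr n a b -> Vr n b a.
Proof. by rewrite /Vr => H; symmetry. Qed.

Lemma Vr_trans n a b c : Vr n a b -> Vr n b c -> Vr n a c.
Proof.
rewrite /Vr => H1 H2.
apply: (@lcancel (pw (D2 n) (Rw b))).
rewrite catA pw_comm -catA H1 catA pw_comm -catA H2 !catA pw_comm; reflexivity.
Qed.

Lemma ctx_form n x y a b : word_ok n x -> all (inr 1 n.-1) b ->
  peq (pw (D2 n) (Rw x + (a + Rw y)) ++ P n x ++ b ++ P n y)
      (P n x ++ (pw (D2 n) a ++ b) ++ (pw (D2 n) (Rw x + Rw y) ++ P n y)).
Proof.
move=> Hx Hb.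
set D := D2 n; set Q := pw D (Rw x + Rw y).
have -> : pw D (Rw x + (a + Rw y)) = pw D a ++ Q by rewrite /Q addnCA pwD.
have E1 : peq (Q ++ (P n x ++ (b ++ P n y))) (P n x ++ (b ++ (Q ++ P n y))).
  have -> : Q ++ (P n x ++ (b ++ P n y)) = (Q ++ (P n x ++ b)) ++ P n y by rewrite !catA.
  rewrite /Q D2pw_comm; last by rewrite all_cat P_rng.
  by rewrite !catA.
rewrite -catA E1 catA D2pw_comm ?P_rng // !catA; reflexivity.
Qed.

Lemma Vr_ctx n x y l r : word_ok n x -> word_ok n y -> word_ok n l -> word_ok n r ->
  Vr n l r -> Vr n (x ++ l ++ y) (x ++ r ++ y).
Proof.
rewrite /Vr => Hx Hy Hl Hr H.
rewrite !P_cat !Rw_cat.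
rewrite (ctx_form _ _ Hx (P_rng Hl)) (ctx_form _ _ Hx (P_rng Hr)) H; reflexivity.
Qed.

Lemma gen_rng n i : gen_ok n i -> 0 < i < n.
Proof. by []. Qed.

Lemma Vr_rel n l r : braid_rel n l r -> Vr n l r.
Proof.
rewrite /Vr; case=> [i b Hi|i j Hi Hj Hij|i j Hi Hj Hij].
- case: b => /=; rewrite /P /PL /Rw /pw /= !cats0.
    by rewrite (star1 (gen_rng Hi)).
  by rewrite (star2 (gen_rng Hi)).
- rewrite /P /PL /Rw /pw /=; exact: comm2 (aty2 Hij).
- rewrite /P /PL /Rw /pw /=; apply: braid3.
  by case/orP: Hij => /eqP ->; rewrite ?aty1 // aty_sym aty1.
Qed.

Lemma ok_cat n u v : word_ok n (u ++ v) = word_ok n u && word_ok n v.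
Proof. exact: all_cat. Qed.

Lemma V_beq n u v : braid_eq n u v -> word_ok n u -> Vr n u v.
Proof.
elim=> [u' l r v' H|w|w1 w2 H IH|w1 w2 w3 H1 IH1 H2 IH2].
- rewrite !ok_cat => /and3P[Hu Hl Hv].
  have /andP[_ Hr] := rel_ok H.
  by apply: Vr_ctx => //; apply: Vr_rel.
- by move=> _; rewrite /Vr.
- move=> Hw2; apply: Vr_sym; apply: IH; by rewrite (beq_ok H).
- move=> Hw1; apply: Vr_trans (IH1 Hw1) (IH2 _); by rewrite -(beq_ok H1).
Qed.

Lemma inv_l n i b : gen_ok n i -> braid_eq n [:: (i, b); (i, ~~ b)] [::].
Proof. by move=> Hi; have := beq_rel [::] [::] (rel_cancel b Hi). Qed.

Lemma D2_rng n : all (inr 1 n.-1) (D2 n).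
Proof. by rewrite /D2 all_cat Dl_rng. Qed.

Lemma Dcomm_letter n a : gen_ok n a.1 ->
  braid_eq n (pos (D2 n) ++ [:: a]) (a :: pos (D2 n)).
Proof.
case: a => i [] /= Hi.
  have := peq_beq (D2c (gen_rng Hi)) (n := n).
  by rewrite /pos map_cat /=; apply; rewrite all_cat D2_rng /= -ok_inr Hi.
have E1 : braid_eq n (pos (D2 n) ++ [:: (i, false)])
   ([:: (i, false); (i, true)] ++ pos (D2 n) ++ [:: (i, false)]).
  by rewrite (inv_l false Hi).
rewrite E1.
have E2 : braid_eq n ((i, true) :: pos (D2 n)) (pos (D2 n) ++ [:: (i, true)]).
  have := peq_beq (peq_sym (D2c (gen_rng Hi))) (n := n).
  by rewrite /pos map_cat /=; apply; rewrite /= -ok_inr Hi D2_rng.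
have -> : [:: (i, false); (i, true)] ++ pos (D2 n) ++ [:: (i, false)] =
  [:: (i, false)] ++ ((i, true) :: pos (D2 n)) ++ [:: (i, false)] by [].
rewrite E2 -catA /= (inv_l true Hi) cats0; reflexivity.
Qed.

Lemma Dcomm_word n w : word_ok n w -> braid_eq n (pos (D2 n) ++ w) (w ++ pos (D2 n)).
Proof.
elim: w => [|a w IH] /=; first by rewrite cats0.
move=> /andP[Ha Hw].
have -> : pos (D2 n) ++ a :: w = (pos (D2 n) ++ [:: a]) ++ w by rewrite -catA.
by rewrite Dcomm_letter //= IH.
Qed.

Lemma pos_pw D k : pos (pw D k) = flatten (nseq k (pos D)).
Proof. by elim: k => //= k IH; rewrite pos_cat IH. Qed.

Lemma Dpw_comm_word n k w : word_ok n w ->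
  braid_eq n (pos (pw (D2 n) k) ++ w) (w ++ pos (pw (D2 n) k)).
Proof.
move=> Hw; elim: k => [|k IH] /=; first by rewrite cats0.
by rewrite pos_cat -catA IH catA Dcomm_word // -catA.
Qed.

Lemma back_letter n a : gen_ok n a.1 ->
  braid_eq n (pos (pw (D2 n) (RL a)) ++ [:: a]) (pos (PL n a)).
Proof.
case: a => i [] Hi //=; rewrite /PL /RL /pw /= cats0.
have := peq_beq (peq_sym (star2 (gen_rng Hi))) (n := n).
rewrite D2_rng => /(_ erefl) ->.
by rewrite pos_cat /= -catA /= inv_l // cats0.
Qed.

Lemma back n w : word_ok n w ->
  braid_eq n (pos (pw (D2 n) (Rw w)) ++ w) (pos (P n w)).
Proof.
elim: w => [|a w IH] /=; first by [].
move=> /andP[Ha Hw].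
have -> : Rw (a :: w) = RL a + Rw w by [].
rewrite pwD pos_cat.
set X := pos (pw (D2 n) (RL a)); set Y := pos (pw (D2 n) (Rw w)).
have -> : (X ++ Y) ++ a :: w = X ++ (Y ++ [:: a]) ++ w by rewrite -!catA.
rewrite /Y Dpw_comm_word; last by rewrite /word_ok /= Ha.
have -> : X ++ ([:: a] ++ pos (pw (D2 n) (Rw w))) ++ w = (X ++ [:: a]) ++ (pos (pw (D2 n) (Rw w)) ++ w).
  by rewrite -!catA.
rewrite IH // /X back_letter //.
by rewrite /P /= pos_cat.
Qed.

Import GRing.Theory Num.Theory Order.TTheory.

Definition swp (c : nat -> bool) i := fun p => if p == i then c i.+1 else if p == i.+1 then c i else c p.
Definition ctr (c : nat -> bool) (a : letter) : int :=
  (if c a.1 != c a.1.+1 then (if a.2 then 1 else -1) else 0)%R.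
Fixpoint Fc c (w : bword) : int := if w is a :: w' then (ctr c a + Fc (swp c a.1) w')%R else 0%R.
Fixpoint fin c (w : bword) := if w is a :: w' then fin (swp c a.1) w' else c.

Lemma Fc_cat c u v : Fc c (u ++ v) = (Fc c u + Fc (fin c u) v)%R.
Proof. by elim: u c => [|a u IH] c /=; [rewrite add0r | rewrite IH addrA]. Qed.
Lemma fin_cat c u v : fin c (u ++ v) = fin (fin c u) v.
Proof. by elim: u c => [|a u IH] c //=. Qed.

Ltac eqs := repeat (case: eqP => [?|?]; subst => //=); try lia.

Lemma swp_swp c i : swp (swp c i) i = c.
Proof. by apply: functional_extensionality => p; rewrite /swp; eqs. Qed.

Lemma swp_comm c i j : (j.+1 < i) || (i.+1 < j) -> swp (swp c i) j = swp (swp c j) i.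
Proof. by move=> H; apply: functional_extensionality => p; rewrite /swp; eqs. Qed.

Lemma ne_S i : (i.+1 == i) = false. Proof. by apply/eqP; lia. Qed.
Lemma ne_SS i : (i.+2 == i) = false. Proof. by apply/eqP; lia. Qed.
Lemma ne_S' i : (i == i.+1) = false. Proof. by apply/eqP; lia. Qed.
Lemma ne_SS' i : (i == i.+2) = false. Proof. by apply/eqP; lia. Qed.

Lemma braid_col c i :
  Fc c [:: sig i; sig i.+1; sig i] = Fc c [:: sig i.+1; sig i; sig i.+1] /\
  fin c [:: sig i; sig i.+1; sig i] = fin c [:: sig i.+1; sig i; sig i.+1].
Proof.
split.
  rewrite /= /ctr /swp /= ?eqxx ?ne_S ?ne_SS ?ne_S' ?ne_SS' /=.
  by case: (c i); case: (c i.+1); case: (c i.+2).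
apply: functional_extensionality => p; rewrite /= /swp ?eqxx ?ne_S ?ne_SS ?ne_S' ?ne_SS'.
case: (p =P i) => [->|]; rewrite ?eqxx ?ne_S ?ne_SS ?ne_S' ?ne_SS' //.
case: (p =P i.+1) => [->|]; rewrite ?eqxx ?ne_S ?ne_SS ?ne_S' ?ne_SS' //.
case: (p =P i.+2) => [->|]; rewrite ?eqxx ?ne_S ?ne_SS ?ne_S' ?ne_SS' //.
Qed.

Lemma rel_col n l r c : braid_rel n l r -> Fc c l = Fc c r /\ fin c l = fin c r.
Proof.
case=> [i b _|i j _ _ H|i j _ _ H].
- split; last by rewrite /= swp_swp.
  rewrite /= /ctr /swp /= ?eqxx ?ne_S ?ne_S' /=.
  by case: (c i); case: (c i.+1); case: b => /=; rewrite ?addr0 ?addrN ?addNr ?add0r.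
- split; last by rewrite /= swp_comm.
  have [E1 E2 E3 E4] : [/\ (j == i) = false, (j == i.+1) = false, (j.+1 == i) = false
    & (j.+1 == i.+1) = false] by split; apply/eqP; lia.
  have [E1' E2' E3' E4'] : [/\ (i == j) = false, (i == j.+1) = false, (i.+1 == j) = false
    & (i.+1 == j.+1) = false] by split; apply/eqP; lia.
  by rewrite /= /ctr /swp /= E1 E2 E3 E4 E1' E2' E3' E4' !addr0 addrC.
- case/orP: H => /eqP ->; first exact: braid_col.
  by have [-> ->] := braid_col c j.
Qed.

Lemma beq_col n u v : braid_eq n u v -> forall c, Fc c u = Fc c v /\ fin c u = fin c v.
Proof.
elim=> [u' l r v' H|w|w1 w2 _ IH|w1 w2 w3 _ IH1 _ IH2] c.
- have [E1 E2] := rel_col (fin c u') H.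
  by split; rewrite ?Fc_cat ?fin_cat ?E1 ?E2.
- by [].
- by have [-> ->] := IH c.
- by have [-> ->] := IH1 c; have [-> ->] := IH2 c.
Qed.

Lemma avoid (j : nat) (w : bword) : all (fun a => a.1 != j) w ->
  Fc (fun p => p <= j)%N w = 0%R /\ fin (fun p => p <= j)%N w = (fun p => p <= j)%N.
Proof.
elim: w => [|a w IH] //= /andP[Ha Hw].
have E : swp (fun p => p <= j)%N a.1 = (fun p => p <= j)%N.
  apply: functional_extensionality => p; rewrite /swp.
  case: (p =P a.1) => [->|_]; first by apply/idP/idP; move: Ha => /eqP; lia.
  case: (p =P a.1.+1) => [->|_] //; by apply/idP/idP; move: Ha => /eqP; lia.
have Ec : ctr (fun p => p <= j)%N a = 0%R.
  have Eq : (a.1 <= j)%N = (a.1.+1 <= j)%N by apply/idP/idP; move: Ha => /eqP; lia.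
  by rewrite /ctr Eq eqxx.
by rewrite E Ec add0r; apply: IH.
Qed.

Definition sgn (b : bool) : int := (if b then 1 else -1)%R.

Lemma uni_sign c b w : all (fun a => a.2 == b) w -> (0 <= sgn b * Fc c w)%R.
Proof.
elim: w c => [|a w IH] c /=; first by rewrite mulr0.
move=> /andP[/eqP Ha Hw]; rewrite mulrDr; apply: addr_ge0; last exact: IH.
rewrite /ctr Ha.
by case: ifP => _; case: b {Ha Hw IH} => //=; rewrite ?mulr0 ?mulr1 ?mulrNN ?mulr1.
Qed.

Lemma uni_zero c b w : all (fun a => a.2 == b) w -> Fc c w = 0%R ->
  all (fun a => c a.1 == c a.1.+1) w.
Proof.
elim: w c => [|a w IH] c //=.
move=> /andP[/eqP Ha Hw] H0.
have H1 := uni_sign (swp c a.1) Hw.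
have H2 : (0 <= sgn b * ctr c a)%R.
  by rewrite /ctr Ha; case: ifP => _; case: b {Ha Hw IH H0 H1} => //=; rewrite mulr0.
have H3 : (sgn b * ctr c a + sgn b * Fc (swp c a.1) w = 0)%R by rewrite -mulrDr H0 mulr0.
have Hc0 : (sgn b * ctr c a = 0)%R.
  move: H1 H2 H3; set x := (sgn b * ctr c a)%R; set y := (sgn b * _)%R; lia.
have Hc : c a.1 == c a.1.+1.
  move: Hc0; rewrite /ctr Ha; case: ifP => [_|/negbFE -> //].
  by case: b {Ha Hw IH H0 H1 H2 H3} => /= E; exfalso; lia.
rewrite Hc /=.
have Es : swp c a.1 = c.
  apply: functional_extensionality => p; rewrite /swp.
  by case: (p =P a.1) => [->|_]; [rewrite (eqP Hc) | case: (p =P a.1.+1) => [->|_] //; rewrite (eqP Hc)].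
apply: IH Hw _; rewrite -Es.
have : ctr c a = 0%R by move: Hc; rewrite /ctr => ->.
by move: H0 => /= + E; rewrite E add0r Es.
Qed.

Lemma Delta_pos n : all (fun a => a.2 == true) (Delta n).
Proof.
apply/allP => a /flattenP [s /mapP [j' _ ->] /mapP [i _ ->]] //.
Qed.

Lemma Delta_mem n j : (0 < j < n)%N -> sig j \in Delta n.
Proof.
move=> Hj; apply/flattenP; exists [seq sig i | i <- rev (iota 1 n.-1)].
  by apply/mapP; exists n.-1 => //; rewrite mem_iota; lia.
by apply/mapP; exists j => //; rewrite mem_rev mem_iota; lia.
Qed.

Lemma all_flat_nseq (P : pred letter) K (w : bword) : all P w -> all P (flatten (nseq K w)).
Proof. by move=> H; elim: K => //= K IH; rewrite all_cat H IH. Qed.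

Lemma mem_flat_nseq (a : letter) K w : (0 < K)%N -> a \in w -> a \in flatten (nseq K w).
Proof. by case: K => // K _ Ha; rewrite /= mem_cat Ha. Qed.

Lemma all_winv (P : pred letter) w : all P (winv w) = all (fun a => P (a.1, ~~ a.2)) w.
Proof. by rewrite /winv all_rev all_map. Qed.

Lemma winv_cons a w : winv (a :: w) = winv w ++ [:: (a.1, ~~ a.2)].
Proof. by rewrite /winv /= rev_cons cats1. Qed.

Lemma winvK w : winv (winv w) = w.
Proof.
rewrite /winv map_rev revK -map_comp; elim: w => //= [[i b] w] IH.
by rewrite negbK IH.
Qed.

Lemma winv_ok n w : word_ok n (winv w) = word_ok n w.
Proof. by rewrite /word_ok all_winv. Qed.

Lemma winv_l n w : word_ok n w -> braid_eq n (winv w ++ w) [::].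
Proof.
elim: w => [|[i b] w IH] //= /andP[Hi Hw].
rewrite winv_cons -catA.
have -> : [:: (i, ~~ b)] ++ (i, b) :: w = [:: (i, ~~ b); (i, ~~ ~~ b)] ++ w by rewrite negbK.
by rewrite inv_l //= IH.
Qed.

Lemma winv_r n w : word_ok n w -> braid_eq n (w ++ winv w) [::].
Proof. by move=> H; have := @winv_l n (winv w); rewrite winvK winv_ok; apply. Qed.

Lemma P_flat n K w : P n (flatten (nseq K w)) = pw (P n w) K.
Proof. by elim: K => //= K IH; rewrite P_cat IH. Qed.
Lemma Rw_flat K w : Rw (flatten (nseq K w)) = (K * Rw w)%N.
Proof. by elim: K => //= K IH; rewrite Rw_cat IH mulSn. Qed.
Lemma pw_mul D K r : pw D (K * r) = pw (pw D r) K.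
Proof. by elim: K => //= K IH; rewrite mulSn pwD IH. Qed.
Lemma size_pw w k : size (pw w k) = (k * size w)%N.
Proof. by elim: k => //= k IH; rewrite size_cat IH mulSn. Qed.
Lemma all_pw (Q : pred nat) w k : all Q w -> all Q (pw w k).
Proof. by move=> H; elim: k => //= k IH; rewrite all_cat H IH. Qed.

Definition c0 (j : nat) := fun p : nat => (p <= j)%N.

Theorem lemma18 (n : nat) (X : bword) :
  2 <= n -> word_ok n X -> periodic n X -> ~ braid_eq n X [::] ->
  n.-1 <= size X.
Proof.
move=> Hn Hok [k [m [Hk Heq]]] Hne.
rewrite leqNgt; apply/negP => Hsz.
have [j Hj Hjx] : exists2 j, (0 < j < n)%N & all (fun a : letter => a.1 != j) X.
  case: (boolP (all (fun j => j \in map fst X) (iota 1 n.-1))) => [Hall|].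
    have := uniq_leq_size (iota_uniq 1 n.-1) (fun x Hx => allP Hall x Hx).
    by rewrite size_iota size_map => H; move: Hsz; rewrite ltnNge H.
  rewrite -has_predC => /hasP [j Hj /= Hnot]; exists j.
    by move: Hj; rewrite mem_iota; lia.
  apply/allP => a Ha; apply/eqP => E; move: Hnot; rewrite -E.
  by rewrite (map_f fst Ha).
have [Y [K [HK HYok HYav HXY EY]]] : exists Y K, [/\ (0 < K)%N, word_ok n Y,
    all (fun a : letter => a.1 != j) Y, (braid_eq n Y [::] -> braid_eq n X [::])
    & wpow X k = flatten (nseq K Y)].
  case: k Hk {Heq} => [K|K] Hk.
    exists X, K; split => //; by case: K Hk.
  exists (winv X), K.+1; split => //; first by rewrite winv_ok.
    by rewrite all_winv.
  move=> HY; rewrite -(cats0 X).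
  transitivity (X ++ winv X); first by rewrite HY.
  exact: winv_r.
have Hav : all (fun a : letter => a.1 != j) (wpow X k) by rewrite EY all_flat_nseq.
have [F0 _] := avoid Hav.
have Hcj : c0 j j != c0 j j.+1 by rewrite /c0 leqnn ltnn.
have Hm : wpow (Delta2 n) m = [::].
  case: m Heq => [[|m']|m'] Heq //; exfalso.
    have [E _] := beq_col Heq (c0 j).
    have Hs : all (fun a : letter => a.2 == true) (wpow (Delta2 n) m'.+1).
      by apply: all_flat_nseq; rewrite /Delta2 all_cat Delta_pos.
    have := uni_zero (c := c0 j) Hs; rewrite -E F0 => /(_ erefl) /allP /(_ (sig j)).
    rewrite mem_flat_nseq // ?mem_cat ?Delta_mem // => /(_ erefl).
    by rewrite (negbTE Hcj).
  have [E _] := beq_col Heq (c0 j).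
  have Hs : all (fun a : letter => a.2 == false) (wpow (Delta2 n) (Negz m')).
    by apply: all_flat_nseq; rewrite all_winv /Delta2 all_cat; apply/andP; split;
      apply: sub_all (Delta_pos n) => a /eqP ->.
  have := uni_zero (c := c0 j) Hs; rewrite -E F0 => /(_ erefl) /allP /(_ (j, false)).
  have Hin : (j, false) \in winv (Delta2 n).
    by rewrite /winv mem_rev; apply/mapP; exists (sig j) => //; rewrite mem_cat Delta_mem.
  by rewrite mem_flat_nseq // => /(_ erefl); rewrite (negbTE Hcj).
rewrite Hm EY in Heq.
have Hflok : word_ok n (flatten (nseq K Y)) by apply: all_flat_nseq.
have V := V_beq Heq Hflok.
rewrite /Vr P_flat Rw_flat /= cats0 pw_mul in V.
set p := P n Y in V; set Dr := pw (D2 n) (Rw Y) in V.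
have Hprng : all (inr 1 n.-1) p by apply: P_rng.
have HDrng : all (inr 1 n.-1) Dr by apply: all_pw; apply: D2_rng.
have Hpr : peq p Dr.
  apply: (@torsion p Dr K (pw (D2 n) (K * size p + K * size Dr))) => //.
    by apply: D2pw_comm.
  move=> i Hi.
  apply: pre_pw_mono (pre_pw (n := n) _) _.
    by rewrite all_cat; apply/andP; split; apply: all_pw.
  rewrite size_cat !size_pw; apply: leq_add; apply: leq_mul => //; lia.
have B := back HYok.
have B2 : braid_eq n (pos p) (pos Dr) by apply: peq_beq.
apply: Hne; apply: HXY.
have Dok : word_ok n (pos Dr).
  by rewrite /word_ok all_map; apply: sub_all HDrng => a /=; rewrite ok_inr.
transitivity ((winv (pos Dr) ++ pos Dr) ++ Y); first by rewrite winv_l.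
by rewrite -catA B B2 winv_l.
Qed.
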